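(* For $n\ge2$ and all $P,Q\in\Gamma_n$, $D_{TJ}(P\|Q)\le \frac23 D_{Th}(P\|Q)$.
   Context: $\Gamma_n=\{P=(p_1,\dots,p_n): p_i>0,\ \sum p_i=1\}$. $h(P\|Q)=\frac12\sum_{i=1}^n(\sqrt{p_i}-\sqrt{q_i})^2$; $J(P\|Q)=\sum_{i=1}^n(p_i-q_i)\ln\frac{p_i}{q_i}$; $T(P\|Q)=\sum_{i=1}^n\frac{p_i+q_i}{2}\ln\frac{p_i+q_i}{2\sqrt{p_iq_i}}$. $D_{TJ}=T-\frac18J$, $D_{Th}=T-h$. *)

(* Defs.v *)
(* concrete reals R. Distributions P = (p_0,...,p_{n-1}) are
   represented as functions nat -> R, only indices 0..n-1 matter. *)
From Stdlib Require Import Reals List.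
Open Scope R_scope.

Definition sumn (n : nat) (f : nat -> R) : R :=
  fold_right Rplus 0 (map f (seq 0 n)).

Definition Gamma (n : nat) (p : nat -> R) : Prop :=
  (forall i, (i < n)%nat -> 0 < p i) /\ sumn n p = 1.

Definition hdiv (n : nat) (p q : nat -> R) : R :=
  / 2 * sumn n (fun i => (sqrt (p i) - sqrt (q i)) ^ 2).

Definition Jdiv (n : nat) (p q : nat -> R) : R :=
  sumn n (fun i => (p i - q i) * ln (p i / q i)).

Definition Tdiv (n : nat) (p q : nat -> R) : R :=
  sumn n (fun i => (p i + q i) / 2 * ln ((p i + q i) / (2 * sqrt (p i * q i)))).

Definition D_TJ (n : nat) (p q : nat -> R) : R := Tdiv n p q - / 8 * Jdiv n p q.
Definition D_Th (n : nat) (p q : nat -> R) : R := Tdiv n p q - hdiv n p q.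

(* Main.v *)
Require Import Defs.
From Coquelicot Require Import Coquelicot.
From Stdlib Require Import Reals Lra Psatz List.
Open Scope R_scope.
Lemma mvt_pos (f df : R -> R) (t : R) : 0 < t ->
  (forall x, 0 < x -> is_derive f x (df x)) ->
  exists c, 0 < c /\ Rmin 1 t <= c <= Rmax 1 t /\ f t - f 1 = df c * (t - 1).
Proof.
  intros Ht Hd.
  assert (Hm : 0 < Rmin 1 t) by (apply Rmin_glb_lt; lra).
  destruct (MVT_gen f 1 t df) as [c [Hc Heq]].
  - intros x Hx. apply Hd. lra.
  - intros x Hx. apply continuity_pt_filterlim. apply (ex_derive_continuous (K:=R_AbsRing) (V:=R_NormedModule)).
    exists (df x). apply Hd. lra.
  - exists c. repeat split; try lra. 
Qed.

Definition hf t := ln t + (t^4 - 8*t^3 + 8*t - 1)/(12*t^2).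
Definition hf' t := (t-1)^4/(6*t^3).
Definition gf t := (10*t^2-2)/(t^2+1) * ln t - 4 * ln ((1+t^2)/2) - 8*(t-1)^2/(t^2+1).
Definition gf' t := 24*t/(t^2+1)^2 * hf t.

Lemma hf_der x : 0 < x -> is_derive hf x (hf' x).
Proof.
  intros Hx. unfold hf, hf'. auto_derive.
  - repeat split; try lra. nra.
  - field. lra.
Qed.

Lemma gf_der x : 0 < x -> is_derive gf x (gf' x).
Proof.
  intros Hx. unfold gf, gf', hf. auto_derive.
  - repeat split; try nra.
  - field. split; nra.
Qed.

Lemma hf_sign t : 0 < t -> 0 <= hf t * (t - 1).
Proof.
  intros Ht. destruct (mvt_pos hf hf' t Ht hf_der) as [c [Hc [_ Heq]]].
  assert (H1 : hf 1 = 0) by (unfold hf; rewrite ln_1; field).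
  rewrite H1 in Heq.
  assert (0 <= hf' c).
  { unfold hf'. apply Rmult_le_pos. replace ((c-1)^4) with (((c-1)^2)^2) by ring. apply pow2_ge_0.
    apply Rlt_le, Rinv_0_lt_compat. apply Rmult_lt_0_compat; [lra| apply pow_lt; lra]. }
  replace (hf t) with (hf' c * (t-1)) by lra.
  replace (hf' c * (t - 1) * (t - 1)) with (hf' c * (t-1)^2) by ring.
  apply Rmult_le_pos; [lra| apply pow2_ge_0].
Qed.

Lemma gf_nonneg t : 0 < t -> 0 <= gf t.
Proof.
  intros Ht. destruct (mvt_pos gf gf' t Ht gf_der) as [c [Hc [Hb Heq]]].
  assert (H1 : gf 1 = 0).
  { unfold gf. rewrite ln_1. replace ((1+1^2)/2) with 1 by field. rewrite ln_1. field. }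
  rewrite H1 in Heq.
  assert (Hs := hf_sign c Hc).
  assert (0 <= (c-1)*(t-1)).
  { destruct (Rle_dec t 1).
    - rewrite Rmin_right in Hb by lra. rewrite Rmax_left in Hb by lra. nra.
    - rewrite Rmin_left in Hb by lra. rewrite Rmax_right in Hb by lra. nra. }
  assert (HA : 0 < 24*c/(c^2+1)^2).
  { apply Rdiv_lt_0_compat. lra. nra. }
  unfold gf' in Heq.
  assert (0 <= (hf c * (c-1)) * ((c-1)*(t-1))) by (apply Rmult_le_pos; lra).
  (* gf t = A * hf c * (t-1); multiply by (c-1)^2 *)
  destruct (Req_dec c 1) as [E|E].
  - subst c. assert (H3 : hf 1 = 0) by (unfold hf; rewrite ln_1; field). rewrite H3 in Heq. lra.
  - assert (0 < (c-1)^2) by (apply pow2_gt_0; lra).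
    assert (0 <= gf t * (c-1)^2).
    { replace (gf t * (c-1)^2) with (24*c/(c^2+1)^2 * ((hf c * (c-1)) * ((c-1)*(t-1)))) by (rewrite Rminus_0_r in Heq; rewrite Heq; ring).
      apply Rmult_le_pos; lra. }
    nra.
Qed.
Lemma fr_le (f g : nat -> R) (l : list nat) : (forall i, In i l -> f i <= g i) ->
  fold_right Rplus 0 (map f l) <= fold_right Rplus 0 (map g l).
Proof.
  induction l as [|a l IH]; simpl; intros H. lra.
  apply Rplus_le_compat. apply H; auto. apply IH; auto.
Qed.
Lemma fr_lin (f g : nat -> R) (c d : R) (l : list nat) :
  fold_right Rplus 0 (map (fun i => c * f i + d * g i) l) =
  c * fold_right Rplus 0 (map f l) + d * fold_right Rplus 0 (map g l).
Proof. induction l as [|a l IH]; simpl. ring. rewrite IH. ring. Qed.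

Lemma sumn_le n f g : (forall i, (i < n)%nat -> f i <= g i) -> sumn n f <= sumn n g.
Proof. intros H. apply fr_le. intros i Hi. apply in_seq in Hi. apply H. lia. Qed.
Lemma sumn_lin n f g c d : sumn n (fun i => c * f i + d * g i) = c * sumn n f + d * sumn n g.
Proof. apply fr_lin. Qed.

Lemma term a b : 0 < a -> 0 < b ->
  8 * ((a+b)/2 * ln ((a+b)/(2*sqrt (a*b)))) + 8 * (sqrt a - sqrt b)^2 <= 3 * ((a-b) * ln (a/b)).
Proof.
  intros Ha Hb.
  set (x := sqrt a). set (y := sqrt b).
  assert (Hx : 0 < x) by (apply sqrt_lt_R0; lra).
  assert (Hy : 0 < y) by (apply sqrt_lt_R0; lra).
  assert (Ea : a = x*x) by (symmetry; apply sqrt_sqrt; lra).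
  assert (Eb : b = y*y) by (symmetry; apply sqrt_sqrt; lra).
  rewrite sqrt_mult by lra. fold x y.
  set (t := x / y).
  assert (Ht : 0 < t) by (apply Rdiv_lt_0_compat; lra).
  assert (E1 : a / b = t * t) by (unfold t; rewrite Ea, Eb; field; lra).
  assert (E2 : (a+b)/(2*(x*y)) = ((1+t^2)/2) / t) by (unfold t; rewrite Ea, Eb; field; lra).
  rewrite E1, E2, ln_mult, ln_div by nra.
  assert (G := gf_nonneg t Ht). unfold gf in G.
  assert (Ex : x = t * y) by (unfold t; field; lra).
  rewrite Ea, Eb, Ex.
  set (L1 := ln t) in *. set (L2 := ln ((1+t^2)/2)) in *.
  assert (0 <= y^2*(t^2+1) * ((10*t^2-2)/(t^2+1) * L1 - 4 * L2 - 8*(t-1)^2/(t^2+1))).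
  { apply Rmult_le_pos; [nra|lra]. }
  match goal with |- ?A <= ?B => assert (B - A = y^2*(t^2+1) * ((10*t^2-2)/(t^2+1) * L1 - 4 * L2 - 8*(t-1)^2/(t^2+1))) by (field; nra) end.
  lra.
Qed.

Theorem proposition5p7 (n : nat) (p q : nat -> R) :
  (2 <= n)%nat -> Gamma n p -> Gamma n q ->
  D_TJ n p q <= 2 / 3 * D_Th n p q.
Proof.
  intros _ [Hp _] [Hq _].
  unfold D_TJ, D_Th, Tdiv, Jdiv, hdiv.
  set (fT := fun i => (p i + q i) / 2 * ln ((p i + q i) / (2 * sqrt (p i * q i)))).
  set (fS := fun i => (sqrt (p i) - sqrt (q i)) ^ 2).
  set (fJ := fun i => (p i - q i) * ln (p i / q i)).
  assert (H : sumn n (fun i => 8 * fT i + 8 * fS i) <= sumn n (fun i => 3 * fJ i + 0 * fJ i)).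
  { apply sumn_le. intros i Hi. unfold fT, fS, fJ.
    assert (K := term (p i) (q i) (Hp i Hi) (Hq i Hi)). lra. }
  rewrite !sumn_lin in H. lra.
Qed.
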